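(* Let $n\ge 1$ and let $\pi$ be a layered permutation of length $n$ which is not a decreasing permutation of even length. Then $\zeta_n$ contains a subsequence order-isomorphic to $\pi$.
   Context: A permutation of length $n$ is a word containing each letter of $[n]$ exactly once. For permutations $\pi$ of length $m$ and $\sigma$ of length $n$, $\pi\oplus\sigma$ is the permutation with $(\pi\oplus\sigma)(i)=\pi(i)$ for $i\le m$ and $\sigma(i-m)+m$ for $i>m$. A permutation is layered if it is a direct sum of decreasing permutations. Two words $u,v$ of length $k$ are order-isomorphic if $u(i)>u(j)\iff v(i)>v(j)$ for all $i,j$; a word $w$ contains a subsequence order-isomorphic to $\pi$ if some $w(i_1)\cdots w(i_n)$ with $i_1<\cdots<i_n$ is order-isomorphic to $\pi$. The word $z_n$ is the concatenation of $n$ runs $r_1\cdots r_n$, where for odd $k$, $r_k$ lists the odd integers in $[n]$ increasingly and for even $k$, $r_k$ lists the even integers in $[n]$ decreasingly. The permutation $\zeta_n$ of length $|z_n|$ is the unique permutation such that for $i\ne j$: $\zeta_n(i)>\zeta_n(j)$ iff either $z_n(i)>z_n(j)$, or $z_n(i)=z_n(j)$ and $i<j$. *)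

(* Defs.v *)
(* Permutations/words are sequences of naturals (letters 1..n). *)
From mathcomp Require Import all_boot.
Set Implicit Arguments. Unset Strict Implicit. Unset Printing Implicit Defensive.

Definition is_perm (s : seq nat) : Prop := perm_eq s (iota 1 (size s)).

Definition dsum (p q : seq nat) : seq nat := p ++ map (addn (size p)) q.

Definition decr (k : nat) : seq nat := rev (iota 1 k).

Definition layered (p : seq nat) : Prop :=
  exists ks : seq nat, p = foldr (fun k acc => dsum (decr k) acc) [::] ks.

Definition order_iso (u v : seq nat) : Prop :=
  size u = size v /\
  forall i j, i < size u -> j < size u ->
    (nth 0 u j < nth 0 u i) = (nth 0 v j < nth 0 v i).

Definition contains (w p : seq nat) : Prop :=
  exists m : bitseq, size m = size w /\ order_iso (mask m w) p.

(* the k-th run of z_n (k >= 1) *)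
Definition zrun (n k : nat) : seq nat :=
  if odd k then [seq x <- iota 1 n | odd x]
  else rev [seq x <- iota 1 n | ~~ odd x].

Definition zword (n : nat) : seq nat := flatten [seq zrun n k | k <- iota 1 n].

Definition is_zeta (n : nat) (zeta : seq nat) : Prop :=
  is_perm zeta /\ size zeta = size (zword n) /\
  forall i j, i < size zeta -> j < size zeta -> i != j ->
    (nth 0 zeta j < nth 0 zeta i) =
    ((nth 0 (zword n) j < nth 0 (zword n) i) ||
     ((nth 0 (zword n) i == nth 0 (zword n) j) && (i < j))).

(* Main.v *)
Require Import Defs.
From mathcomp Require Import all_boot zify.
Set Implicit Arguments. Unset Strict Implicit. Unset Printing Implicit Defensive.

Lemma oddE x : odd x = (x %% 2 == 1).
Proof. by rewrite modn2; case: (odd x). Qed.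

Definition pat (ks : seq nat) := foldr (fun k acc => dsum (decr k) acc) [::] ks.

Lemma size_dsum p q : size (dsum p q) = size p + size q.
Proof. by rewrite /dsum size_cat size_map. Qed.

Lemma size_decr k : size (decr k) = k.
Proof. by rewrite /decr size_rev size_iota. Qed.

Lemma dsum0s q : dsum [::] q = q.
Proof. by rewrite /dsum /=; elim: q => //= x q ->. Qed.

Lemma dsums0 p : dsum p [::] = p.
Proof. by rewrite /dsum /= cats0. Qed.

Lemma dsumA p q r : dsum p (dsum q r) = dsum (dsum p q) r.
Proof.
rewrite /dsum map_cat catA size_cat size_map -map_comp; congr (_ ++ _).
by apply: eq_map => x /=; rewrite addnA.
Qed.

Lemma pat_rcons ks k : pat (rcons ks k) = dsum (pat ks) (decr k).
Proof.
elim: ks => [|x ks IH] /=; first by rewrite dsums0 dsum0s.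
by rewrite IH dsumA.
Qed.

Lemma size_pat ks : size (pat ks) = sumn ks.
Proof. by elim: ks => //= k ks IH; rewrite size_dsum size_decr IH. Qed.

Lemma pat_filter ks : pat [seq k <- ks | 0 < k] = pat ks.
Proof.
elim: ks => //= k ks IH; case: k => [|k] /=; last by rewrite IH.
by rewrite IH /decr /= dsum0s.
Qed.

Lemma sumn_filter ks : sumn [seq k <- ks | 0 < k] = sumn ks.
Proof. by elim: ks => //= k ks IH; case: k => [|k] /=; rewrite IH. Qed.

Lemma nth_decr k a : a < k -> nth 0 (decr k) a = k - a.
Proof.
move=> ak; rewrite /decr nth_rev ?size_iota // nth_iota; last by lia.
lia.
Qed.

Notation pt := (nat * nat)%type.

Definition goodp (P : seq pt) (s : seq nat) :=
  [/\ size P = size s, all (fun x => 0 < x <= size s) s &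
   forall a b, a < b -> b < size s ->
     (nth 0 s a < nth 0 s b) = ((nth (0,0) P a).2 < (nth (0,0) P b).2)].

Lemma goodp_cat P Q s t : goodp P s -> goodp Q t ->
  (forall p q, p \in P -> q \in Q -> p.2 < q.2) -> goodp (P ++ Q) (dsum s t).
Proof.
case=> sP aP cP [] sQ aQ cQ PQ; split.
- by rewrite size_cat size_dsum sP sQ.
- rewrite size_dsum /dsum all_cat all_map; apply/andP; split.
    apply/allP=> x /(allP aP) /andP [h1 h2]; apply/andP; split => //; lia.
  apply/allP=> x /(allP aQ) /andP [h1 h2] /=; apply/andP; split; lia.
- move=> a b ab; rewrite size_dsum => bs.
  rewrite /dsum !nth_cat -sP.
  case: (ltnP b (size P)) => hb.
    have ha : a < size P by lia.
    by rewrite ha (cP a b ab) // -sP.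
  have hbq : b - size P < size Q by rewrite sQ; lia.
  have nb : nth 0 [seq size P + i | i <- t] (b - size P) = size P + nth 0 t (b - size P).
    by rewrite (nth_map 0) // -sQ.
  rewrite nb.
  case: (ltnP a (size P)) => ha.
    have -> : nth 0 s a < size P + nth 0 t (b - size P).
      have : nth 0 s a \in s by apply: mem_nth; rewrite -sP.
      move/(allP aP)=> /andP [_ h].
      have : nth 0 t (b - size P) \in t by apply: mem_nth; rewrite -sQ.
      move/(allP aQ)=> /andP [h' _]; lia.
    symmetry; apply: PQ; apply: mem_nth => //.
  have na : nth 0 [seq size P + i | i <- t] (a - size P) = size P + nth 0 t (a - size P).
    by rewrite (nth_map 0) // -sQ; lia.
  rewrite na ltn_add2l cQ //; first lia.
  by rewrite -sQ.
Qed.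

Definition zlt (p q : pt) : bool :=
  (p.1 < q.1) || ((p.1 == q.1) && (if odd p.1 then p.2 < q.2 else q.2 < p.2)).

Definition Aof C := if odd C then C else C.+1.

Lemma Aof_odd C : odd (Aof C).
Proof. rewrite /Aof; case: ifP => //= h; by rewrite h. Qed.

Lemma Aof_ge C : C <= Aof C <= C.+1.
Proof. by rewrite /Aof; case: ifP => _; rewrite leqnn ?leqnSn. Qed.

Lemma Aof_id C : odd C -> Aof C = C.
Proof. by rewrite /Aof => ->. Qed.

Definition validp C M (p : pt) :=
  [&& 0 < p.1, p.1 <= C, 0 < p.2, p.2 <= M & odd p.1 == odd p.2].

Definition Emb ks P C M :=
  [/\ goodp P (pat ks), all (validp C M) P & pairwise zlt P].

Definition blk c0 y0 k t : seq pt :=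
  [seq (if i == 0 then (c0, y0) else (c0 + i + t, y0 + t - i)) | i <- iota 0 k].

Lemma size_blk c0 y0 k t : size (blk c0 y0 k t) = k.
Proof. by rewrite size_map size_iota. Qed.

Lemma nth_blk c0 y0 k t i : i < k ->
  nth (0,0) (blk c0 y0 k t) i = if i == 0 then (c0, y0) else (c0 + i + t, y0 + t - i).
Proof. by move=> ik; rewrite (nth_map 0) ?size_iota // nth_iota. Qed.

Lemma mem_blk c0 y0 k t q : q \in blk c0 y0 k t ->
  exists2 i, i < k & q = if i == 0 then (c0, y0) else (c0 + i + t, y0 + t - i).
Proof.
move/(nthP (0,0)) => [i]; rewrite size_blk => ik <-.
by exists i => //; rewrite nth_blk.
Qed.

Lemma emb_blk ks P C M c0 y0 k t : Emb ks P C M -> 0 < k -> t <= k.-1 -> t <= 1 ->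
  Aof C <= c0 -> M + k <= y0 + t -> odd c0 = odd y0 ->
  Emb (rcons ks k) (P ++ blk c0 y0 k t) (c0 + k.-1 + t) y0.
Proof.
case=> gP vP pP k0 tk t1 Ac My par.
have CA := Aof_ge C.
have A1 : 0 < Aof C by have := Aof_odd C; case: (Aof C).
split.
- rewrite pat_rcons; apply: goodp_cat => //.
  + split; first by rewrite size_blk size_decr.
    * apply/allP => x; rewrite size_decr /decr mem_rev mem_iota; lia.
    * move=> a b ab; rewrite size_decr => bk.
      rewrite !nth_decr ?nth_blk //; try lia.
      have -> : (b == 0) = false by apply/eqP; lia.
      case: (a =P 0) => [->|/eqP a0] /=; lia.
  + move=> p q pP' /mem_blk [i ik ->].
    move/(allP vP): pP' => /and5P [_ _ _ h _].
    case: (i =P 0) => _ /=; lia.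
- rewrite all_cat; apply/andP; split.
    apply/allP=> p /(allP vP) /and5P [h1 h2 h3 h4 h5]; apply/and5P; split => //; lia.
  apply/allP=> q /mem_blk [i ik ->]; case: (i =P 0) => [_|/eqP i0]; apply/and5P; split => //=; try lia.
- rewrite pairwise_cat; apply/and3P; split => //.
    apply/allrelP => p q pP' /mem_blk [i ik ->].
    move/(allP vP): pP' => /and5P [h1 h2 h3 h4 h5].
    rewrite /zlt; case: ifP => [_|/negbT i0] /=; last by apply/orP; left; lia.
    case: (ltngtP p.1 c0) => //= h; first lia.
    rewrite h.
    have oc : odd c0.
      move: Ac; rewrite /Aof; case: ifP => o Ac'; last lia.
      by have -> : c0 = C by lia.
    rewrite oc; lia.
  apply/(pairwiseP (0,0)) => a b; rewrite size_blk => ak bk ab.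
  rewrite !nth_blk //; rewrite /zlt; apply/orP; left.
  have -> : (b == 0) = false by apply/eqP; lia.
  case: (a =P 0) => _ /=; lia.
Qed.

Lemma emb_nil : Emb [::] [::] 0 0.
Proof. by split. Qed.

Lemma Aof_leq x y : x <= y -> (x = y -> odd y) -> Aof x <= y.
Proof.
rewrite /Aof; case: ifP => // o xy h.
case: (ltnP x y) => // yx.
have e : x = y by lia.
by move: (h e); rewrite -e o.
Qed.

Lemma G1 ks : all (fun k => 0 < k) ks ->
  exists P C, Emb ks P C (sumn ks) /\ Aof C <= (sumn ks).+1.
Proof.
elim/last_ind: ks => [|ks k IH]; first by move=> _; exists [::], 0; split => //; exact: emb_nil.
rewrite all_rcons => /andP [k0 /IH [P [C [E A]]]].
move: E A; set b := sumn ks => E A.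
have Ao := Aof_odd C.
pose c0 := if odd (Aof C) == odd (b + k) then Aof C else (Aof C).+1.
exists (P ++ blk c0 (b + k) k 0), (c0 + k.-1 + 0); split.
  rewrite sumn_rcons; apply: (emb_blk E) => //; rewrite ?addn0 //.
  - by rewrite /c0; case: ifP.
  - by rewrite /c0; case: ifP => [/eqP //|/negbT]; rewrite /= Ao; case: (odd (b+k)).
rewrite sumn_rcons -/b /c0.
move: Ao A; case: ifP => [_|/negbT h] Ao A.
  apply: Aof_leq; first lia.
  move=> e; lia.
apply: Aof_leq; first lia.
move=> e; move: h Ao; rewrite !oddE; lia.
Qed.

Lemma Lem ks : all (fun k => 0 < k) ks -> ~~ odd (sumn ks) -> ks != [::] ->
  exists P C M, Emb ks P C M /\
   ((M < sumn ks /\ Aof C <= (sumn ks).+1) \/ (Aof C < sumn ks /\ M <= (sumn ks).+1)).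
Proof.
elim/last_ind: ks => [|ks k IH] //.
rewrite all_rcons sumn_rcons => /andP [k0 pos] ev _.
have [ek|ne] := eqVneq ks [::].
  rewrite ek /= add0n in ev *.
  have k2 : 1 < k by move: ev k0; rewrite oddE; lia.
  have ok1 : odd k.-1 by rewrite -subn1 oddE; move: ev; rewrite oddE; lia.
  exists ([::] ++ blk 1 k.-1 k 1), (1 + k.-1 + 1), k.-1; split.
    by apply: (emb_blk emb_nil) => //; lia.
  left; split; first lia.
  rewrite Aof_id; first lia.
  by rewrite -subn1 oddE; move: ok1; rewrite -subn1 !oddE; lia.
move: ev; set b := sumn ks => ev.
have Ao : forall C, odd (Aof C) := Aof_odd.
case ok: (odd k).
  have ob : odd b by move: ev ok; rewrite !oddE; lia.
  have [P [C [E A]]] := G1 pos; rewrite -/b in E A.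
  exists (P ++ blk (Aof C) (b + k).+1 k 0), (Aof C + k.-1 + 0), (b + k).+1; split.
    apply: (emb_blk E) => //; try lia.
    by move: (Ao C) ob ok; rewrite !oddE; lia.
  right; split; last lia.
  have : Aof C <= b by move: (Ao C) ob A; rewrite !oddE; lia.
  rewrite (@Aof_id (Aof C + k.-1 + 0)); first lia.
  by rewrite addn0 -subn1 oddE; move: (Ao C) ok; rewrite !oddE; lia.
have eb : ~~ odd b by move: ev ok; rewrite !oddE; lia.
have [P [C [M [E [[M1 A1]|[A1 M1]]]]]] := IH pos eb ne.
  exists (P ++ blk (Aof C) (b + k).-1 k 0), (Aof C + k.-1 + 0), (b + k).-1; split.
    apply: (emb_blk E) => //; try lia.
    by move: (Ao C) eb ok k0; rewrite -subn1 !oddE; lia.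
  left; split; first lia.
  have := Aof_ge (Aof C + k.-1 + 0); lia.
exists (P ++ blk (Aof C) (b + k).+1 k 0), (Aof C + k.-1 + 0), (b + k).+1; split.
  apply: (emb_blk E) => //; try lia.
  by move: (Ao C) eb ok; rewrite !oddE; lia.
right; split; last lia.
have : Aof C <= b.-1 by move: (Ao C) eb A1; rewrite !oddE; lia.
have := Aof_ge (Aof C + k.-1 + 0); lia.
Qed.

Lemma construct ks n : all (fun k => 0 < k) ks -> sumn ks = n -> 0 < n ->
  ~ (pat ks = decr n /\ ~~ odd n) ->
  exists P C M, Emb ks P C M /\ C <= n /\ M <= n.
Proof.
move=> pos sn n0 nd.
case on: (odd n).
  have [P [C [E A]]] := G1 pos; rewrite sn in E A.
  exists P, C, n; split => //; split => //.
  have := Aof_ge C; have := Aof_odd C; move: on A; rewrite !oddE; lia.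
move: pos sn nd; case/lastP: ks => [|ks k]; first by move=> _ /= e; lia.
rewrite all_rcons sumn_rcons => /andP [k0 pos] sn nd.
have Ao : forall C, odd (Aof C) := Aof_odd.
case ok: (odd k).
  have [P [C [E A]]] := G1 pos.
  have ob : odd (sumn ks) by move: on ok; rewrite -sn !oddE; lia.
  exists (P ++ blk (Aof C).+1 n k 0), ((Aof C).+1 + k.-1 + 0), n; split.
    apply: (emb_blk E) => //; try lia.
    by move: (Ao C) on; rewrite /= !oddE; lia.
  split => //.
  have : Aof C <= sumn ks by move: (Ao C) ob A; rewrite !oddE; lia.
  lia.
have [ek|ne] := eqVneq ks [::].
  exfalso; apply: nd; split; last by rewrite on.
  by rewrite ek /= dsums0 -sn ek /= add0n.
have eb : ~~ odd (sumn ks) by move: on ok; rewrite -sn !oddE; lia.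
have [P [C [M [E [[M1 A1]|[A1 M1]]]]]] := Lem pos eb ne.
  exists (P ++ blk (Aof C) n.-1 k 0), (Aof C + k.-1 + 0), n.-1; split.
    apply: (emb_blk E) => //; try lia.
    by move: (Ao C) on n0; rewrite -subn1 !oddE; lia.
  split; lia.
have k2 : 1 < k by move: ok k0; rewrite oddE; lia.
exists (P ++ blk (Aof C).+1 n k 1), ((Aof C).+1 + k.-1 + 1), n; split.
  apply: (emb_blk E) => //; try lia.
  by move: (Ao C) on; rewrite /= !oddE; lia.
split => //.
have : Aof C < sumn ks by [].
move: (Ao C) eb; rewrite !oddE; lia.
Qed.

Lemma nth_flat (L : seq (seq nat)) j i : i < size (nth [::] L j) ->
  nth 0 (flatten L) (sumn (map size (take j L)) + i) = nth 0 (nth [::] L j) i.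
Proof.
elim: L j => [|x L IH] [|j] //= h; first by rewrite nth_cat h.
rewrite nth_cat; case: ifP => [|_]; first lia.
by rewrite -addnA addKn IH.
Qed.

Lemma sumn_take_mono (L : seq (seq nat)) j1 j2 : j1 <= j2 ->
  sumn (map size (take j1 L)) <= sumn (map size (take j2 L)).
Proof.
move=> h; rewrite -(subnKC h) takeD map_cat sumn_cat; exact: leq_addr.
Qed.

Lemma off_step (L : seq (seq nat)) j : j < size L ->
  sumn (map size (take j.+1 L)) = sumn (map size (take j L)) + size (nth [::] L j).
Proof. by move=> h; rewrite (take_nth [::] h) map_rcons sumn_rcons. Qed.

Lemma off_lt (L : seq (seq nat)) j j' i i' : j < j' -> i < size (nth [::] L j) ->
  sumn (map size (take j L)) + i < sumn (map size (take j' L)) + i'.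
Proof.
move=> jj hi.
have jL : j < size L by case: (ltnP j (size L)) => // h; move: hi; rewrite nth_default.
have := sumn_take_mono L jj; rewrite off_step //; lia.
Qed.

Lemma off_size (L : seq (seq nat)) j i : i < size (nth [::] L j) ->
  sumn (map size (take j L)) + i < size (flatten L).
Proof.
move=> hi.
have jL : j < size L by case: (ltnP j (size L)) => // h; move: hi; rewrite nth_default.
rewrite size_flatten /shape.
have := sumn_take_mono L (j1 := j.+1) (j2 := size L) jL; rewrite take_size off_step //; lia.
Qed.

Definition runs n := [seq zrun n k | k <- iota 1 n].

Lemma zword_runs n : zword n = flatten (runs n).
Proof. by []. Qed.

Lemma nth_runs n c : 0 < c <= n -> nth [::] (runs n) c.-1 = zrun n c.
Proof.
move=> h; rewrite (nth_map 0) ?size_iota; last lia.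
rewrite nth_iota; last lia.
congr zrun; lia.
Qed.

Lemma mem_zrun n c y : 0 < y <= n -> odd y = odd c -> y \in zrun n c.
Proof.
move=> h p; rewrite /zrun; case: ifP => o.
  by rewrite mem_filter mem_iota p o /=; lia.
by rewrite mem_rev mem_filter mem_iota p o /=; lia.
Qed.

Definition pidx n (p : pt) := sumn (map size (take p.1.-1 (runs n))) + index p.2 (zrun n p.1).

Definition okp n (p : pt) := [&& 0 < p.1, p.1 <= n, 0 < p.2, p.2 <= n & odd p.1 == odd p.2].

Lemma pidx_size n p : okp n p -> pidx n p < size (zword n).
Proof.
case/and5P => h1 h2 h3 h4 /eqP h5.
rewrite zword_runs; apply: off_size.
rewrite nth_runs ?h1 ?h2 // index_mem; apply: mem_zrun; rewrite ?h3 ?h4 //.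
Qed.

Lemma pidx_val n p : okp n p -> nth 0 (zword n) (pidx n p) = p.2.
Proof.
case/and5P => h1 h2 h3 h4 /eqP h5.
have m : p.2 \in zrun n p.1 by apply: mem_zrun; rewrite ?h3 ?h4.
rewrite zword_runs /pidx nth_flat nth_runs ?h1 ?h2 ?nth_index // index_mem //.
Qed.

Lemma zrun_odd_sorted n : sorted leq [seq x <- iota 1 n | odd x].
Proof. apply: sorted_filter; [exact: leq_trans | exact: iota_sorted]. Qed.

Lemma pidx_lt n p q : okp n p -> okp n q -> zlt p q -> pidx n p < pidx n q.
Proof.
move=> hp hq.
move: (hp) (hq) => /and5P [p1 p2 p3 p4 /eqP p5] /and5P [q1 q2 q3 q4 /eqP q5].
rewrite /zlt => /orP [lt|/andP [/eqP e c]].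
  rewrite /pidx; apply: off_lt; first lia.
  rewrite nth_runs ?p1 ?p2 // index_mem; apply: mem_zrun; rewrite ?p3 ?p4 //.
rewrite /pidx -e ltn_add2l.
have mp : p.2 \in zrun n p.1 by apply: mem_zrun; rewrite ?p3 ?p4.
have mq : q.2 \in zrun n p.1 by apply: mem_zrun; rewrite ?q3 ?q4 // e.
rewrite ltnNge; apply/negP => hi.
move: mp mq hi c; rewrite /zrun; case: ifP => o mp mq hi c.
  have := sorted_leq_index leq_trans leqnn (zrun_odd_sorted n) _ _ mq mp hi; lia.
have st : sorted (fun x y => y <= x) (rev [seq x <- iota 1 n | ~~ odd x]).
  rewrite rev_sorted; apply: sorted_filter; [exact: leq_trans | exact: iota_sorted].
have tr : transitive (fun x y : nat => y <= x) by move=> a b d h1 h2; exact: leq_trans h2 h1.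
have := sorted_leq_index tr (fun x => leqnn x) st _ _ mq mp hi; lia.
Qed.

Lemma mask_idx (s : seq nat) I : sorted ltn I -> all (fun i => i < size s) I ->
  exists m : bitseq, size m = size s /\ mask m s = map (nth 0 s) I.
Proof.
move=> sI aI.
exists [seq i \in I | i <- iota 0 (size s)]; split; first by rewrite size_map size_iota.
rewrite -[X in mask _ X](mkseq_nth 0 s) /mkseq.
rewrite -map_mask -filter_mask; congr map.
apply: (irr_sorted_eq ltn_trans ltnn).
- apply: sorted_filter; [exact: ltn_trans | exact: iota_ltn_sorted].
- exact: sI.
- move=> x; rewrite mem_filter mem_iota; case xI: (x \in I) => //=.
  by have := allP aI x xI; lia.
Qed.

Lemma bridge n zeta ks P C M : is_zeta n zeta -> Emb ks P C M -> C <= n -> M <= n ->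
  uniq (pat ks) -> contains zeta (pat ks).
Proof.
case=> _ [sz zcmp] [[sP _ gP] vP pP] Cn Mn up.
have okP : all (okp n) P.
  apply/allP => p /(allP vP) /and5P [h1 h2 h3 h4 h5]; apply/and5P; split => //; lia.
set I := map (pidx n) P.
have pI : pairwise ltn I.
  rewrite /I pairwise_map; apply: (sub_in_pairwise (P := okp n)) okP pP.
  move=> p q hp hq h; exact: pidx_lt hp hq h.
have aI : all (fun i => i < size zeta) I.
  apply/allP => i /mapP [p pP' ->]; rewrite sz; exact: pidx_size (allP okP p pP').
have [m [sm em]] := mask_idx (pairwise_sorted pI) aI.
exists m; split => //; rewrite em; split; first by rewrite !size_map.
move=> a b; rewrite !size_map => ha hb.
have nI : forall x, x < size P -> nth 0 I x = pidx n (nth (0,0) P x).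
  by move=> x hx; rewrite (nth_map (0,0)).
rewrite !(nth_map 0) ?size_map // !nI //.
have oka : okp n (nth (0,0) P a) by apply: (allP okP); apply: mem_nth.
have okb : okp n (nth (0,0) P b) by apply: (allP okP); apply: mem_nth.
have sa := pidx_size oka; have sb := pidx_size okb.
rewrite -sz in sa sb.
have neq : forall x y, x < size P -> y < size P -> x != y -> nth 0 (pat ks) x != nth 0 (pat ks) y.
  by move=> x y hx hy xy; rewrite nth_uniq // -sP.
case: (ltngtP a b) => hab; last by rewrite hab !ltnn.
- have ilt : pidx n (nth (0,0) P a) < pidx n (nth (0,0) P b).
    by rewrite -!nI //; apply: (pairwiseP 0 pI) => //; rewrite inE size_map.
  rewrite zcmp //; last by rewrite neq_ltn ilt.
  rewrite !pidx_val // ilt andbT.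
  have g := gP a b hab; rewrite -sP in g; have {}g := g hb.
  have := neq a b ha hb (negbT (ltn_eqF hab)); move: g; lia.
- have ilt : pidx n (nth (0,0) P b) < pidx n (nth (0,0) P a).
    by rewrite -!nI //; apply: (pairwiseP 0 pI) => //; rewrite inE size_map.
  rewrite zcmp //; last by rewrite neq_ltn ilt orbT.
  have f : (pidx n (nth (0,0) P a) < pidx n (nth (0,0) P b)) = false.
    by rewrite ltnNge (ltnW ilt).
  rewrite !pidx_val // f andbF orbF.
  have g := gP b a hab; rewrite -sP in g; have {}g := g ha.
  move: g; lia.
Qed.

Theorem proposition6p3 (n : nat) (pi zeta : seq nat) :
  1 <= n -> size pi = n -> is_perm pi -> layered pi ->
  ~ (pi = decr n /\ ~~ odd n) ->
  is_zeta n zeta ->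
  contains zeta pi.
Proof.
move=> n1 sp ip [ks eks] nd hz.
have e : pi = pat [seq k <- ks | 0 < k] by rewrite pat_filter eks.
have pos : all (fun k => 0 < k) [seq k <- ks | 0 < k] by apply/allP => x; rewrite mem_filter => /andP [].
have sn : sumn [seq k <- ks | 0 < k] = n by rewrite -sp e size_pat.
have up : uniq pi by rewrite (perm_uniq ip) iota_uniq.
have nd' : ~ (pat [seq k <- ks | 0 < k] = decr n /\ ~~ odd n) by rewrite -e.
have [P [C [M [E [Cn Mn]]]]] := construct pos sn n1 nd'.
rewrite e; apply: (bridge hz E) => //; by rewrite -e.
Qed.
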